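(* Let $(X,\|\cdot\|)$ be a normed linear space over $\mathbb{R}$ or $\mathbb{C}$. Then for all $x,a\in X$, $$\langle x,a\rangle_i\ \ge\ \|a\|\left(\|a\|-\|x-a\|\right).$$ The inequality is sharp: for every $a\in X\setminus\{0\}$ and every $\varepsilon\in(0,1)$, equality holds for $x=\varepsilon a$, both sides being equal to the nonzero number $\varepsilon\|a\|^2$.
   Context: For a normed linear space $(X,\|\cdot\|)$, the inferior semi-inner product is defined for $x,y\in X$ by $\langle x,y\rangle_i:=\lim_{t\to 0^-}\frac{\|y+tx\|^2-\|y\|^2}{2t}$. *)

(* Defs.v *)
From HB Require Import structures.
From mathcomp Require Import all_boot all_order all_algebra.
From mathcomp Require Import all_classical all_reals all_analysis.
Set Implicit Arguments. Unset Strict Implicit. Unset Printing Implicit Defensive.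
Import Order.TTheory GRing.Theory Num.Theory.
Import numFieldNormedType.Exports.
Local Open Scope ring_scope.
Local Open Scope classical_set_scope.

Definition sip_i {R : realType} {V : normedModType R} (x y : V) : R :=
  lim ((fun t : R => (`|y + t *: x| ^+ 2 - `|y| ^+ 2) / (2 * t)) @ 0^'-).

(* Main.v *)
Require Import Defs.
From HB Require Import structures.
From mathcomp Require Import all_boot all_order all_algebra.
From mathcomp Require Import all_classical all_reals all_analysis.
From mathcomp Require Import lra ring.
Import Order.TTheory GRing.Theory Num.Theory.
Import numFieldNormedType.Exports.
Local Open Scope ring_scope.
Local Open Scope classical_set_scope.

Section S.
Context (R : realType) (V : normedModType R).

Definition slp (x a : V) (t : R) : R := (`|a + t *: x| - `|a|) / t.

Lemma slp_mono (x a : V) (t1 t2 : R) : t1 <= t2 -> t2 < 0 -> slp x a t1 <= slp x a t2.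
Proof.
move=> h12 h2; have h1 : t1 < 0 by apply: le_lt_trans h2.
have key : t1 *: (a + t2 *: x) = t2 *: (a + t1 *: x) + (t1 - t2) *: a.
  by rewrite !scalerDr !scalerA scalerBl [t2 * t1]mulrC [RHS]addrC addrA subrK.
have hn : `|t1| * `|a + t2 *: x| <= `|t2| * `|a + t1 *: x| + `|t1 - t2| * `|a|.
  by rewrite -!normrZ key ler_normD.
rewrite ltr0_norm // ltr0_norm // ler0_norm ?subr_le0 // in hn.
rewrite /slp ler_ndivrMr // mulrAC ler_ndivrMr //. nra.
Qed.

Lemma slp_ub (x a : V) (t : R) : t < 0 -> slp x a t <= `|x|.
Proof.
move=> ht; rewrite /slp ler_ndivrMr //.
have : `|a| <= `|a + t *: x| + `|t| * `|x|.
  rewrite -normrZ; have {1}-> : a = (a + t *: x) - t *: x by rewrite addrK.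
  exact: ler_normB.
rewrite ltr0_norm //. nra.
Qed.

Lemma slp_lb (x a : V) (t : R) : -1 < t -> t < 0 -> `|a| - `|x - a| <= slp x a t.
Proof.
move=> h1 ht; rewrite /slp ler_ndivlMr //.
have e : a + t *: x = (1 + t) *: a + t *: (x - a).
  by rewrite scalerDl scale1r scalerBr -addrA [t *: a + _]addrCA subrr addr0.
have : `|a + t *: x| <= (1 + t) * `|a| + (- t) * `|x - a|.
  rewrite e; apply: le_trans (ler_normD _ _) _.
  by rewrite !normrZ ger0_norm ?ltr0_norm //; lra.
nra.
Qed.

Lemma slp_cvg (x a : V) : cvg (slp x a t @[t --> 0^'-]).
Proof.
apply: nondecreasing_at_left_is_cvgr.
- near=> s => u v; rewrite !in_itv /= => /andP[_ hu] /andP[_ hv] huv.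
  exact: slp_mono.
- near=> s; exists `|x| => z [y] /=; rewrite in_itv /= => /andP[_ hy] <-.
  exact: slp_ub.
Unshelve. all: by end_near. Qed.

Lemma nrm_cvg (x a : V) : `|a + t *: x| @[t --> 0^'-] --> `|a|.
Proof.
apply: cvg_at_left_filter.
have -> : `|a| = `|a + 0 *: x| by rewrite scale0r addr0.
apply: cvg_norm; apply: cvgD; first exact: cvg_cst.
by apply: cvgZr_tmp; exact: cvg_id.
Qed.

Lemma q_eq (x a : V) :
  (fun t : R => (`|a + t *: x| ^+ 2 - `|a| ^+ 2) / (2 * t)) =
  (fun t => slp x a t * ((`|a + t *: x| + `|a|) / 2)).
Proof.
apply: funext => t; rewrite /slp invfM subr_sqr.
ring.
Qed.

Lemma sip_eq (x a : V) : sip_i x a = lim (slp x a t @[t --> 0^'-]) * `|a|.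
Proof.
rewrite /sip_i q_eq.
have H : (`|a + t *: x| + `|a|) / 2 @[t --> 0^'-] --> (`|a| + `|a|) / 2.
  apply: cvgM; last exact: cvg_cst.
  apply: cvgD; [exact: nrm_cvg | exact: cvg_cst].
have -> : lim (slp x a t @[t --> 0^'-]) * `|a| =
  lim (slp x a t @[t --> 0^'-]) * ((`|a| + `|a|) / 2) by rewrite mulrDl -splitr.
apply: cvg_lim => //; exact: cvgM (slp_cvg x a) H.
Qed.

Lemma slp_eps (a : V) (eps t : R) : 0 < eps < 1 -> -1 < t -> t < 0 ->
  slp (eps *: a) a t = eps * `|a|.
Proof.
move=> /andP[e0 e1] t1 t0.
rewrite /slp scalerA.
have -> : a + (t * eps) *: a = (1 + t * eps) *: a by rewrite scalerDl scale1r.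
rewrite normrZ ger0_norm; last by nra.
have tn : t != 0 by rewrite lt_eqF.
by field.
Qed.

Lemma slp_eps_near (a : V) (eps : R) : 0 < eps < 1 ->
  \forall t \near 0^'-, slp (eps *: a) a t = eps * `|a|.
Proof.
move=> he; near=> t; apply: slp_eps => //.
Unshelve. all: by end_near. Qed.

End S.

Theorem lemma2p2 (R : realType) (V : normedModType R) :
  (forall x a : V, `|a| * (`|a| - `|x - a|) <= sip_i x a) /\
  (forall (a : V) (eps : R), a != 0 -> 0 < eps < 1 ->
     sip_i (eps *: a) a = `|a| * (`|a| - `|eps *: a - a|) /\
     sip_i (eps *: a) a = eps * `|a| ^+ 2 /\
     eps * `|a| ^+ 2 != 0).
Proof.
split.
  move=> x a; rewrite sip_eq mulrC; apply: ler_wpM2r => //.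
  apply: limr_ge; first exact: slp_cvg.
  near=> t; apply: slp_lb; [near: t; apply: nbhs_left_gt; lra | near: t; exact: nbhs_left_lt].
move=> a eps a0 he.
have hs : sip_i (eps *: a) a = eps * `|a| ^+ 2.
  rewrite sip_eq expr2 mulrA; congr (_ * _).
  have hn : \forall t \near 0^'-, @slp R V (eps *: a) a t = eps * `|a|.
    exact: slp_eps_near.
  apply/eqP; rewrite eq_le; apply/andP; split.
    apply: limr_le; first exact: slp_cvg.
    by apply: filterS hn => t ->.
  apply: limr_ge; first exact: slp_cvg.
  by apply: filterS hn => t ->.
case/andP: he => e0 e1.
split; last split => //.
  rewrite hs -[X in _ *: a - X]scale1r -scalerBl normrZ ler0_norm; last by lra.
  ring.
by rewrite mulf_neq0 ?expf_neq0 ?normr_eq0 // gt_eqF.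
Unshelve. all: by end_near. Qed.
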